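(* Any braid $b\in\mathcal{B}_3$ which is not a power of $\Delta_3$ can be written in a unique way in the form $\sigma_j^k\,b_1\,\Delta_3^{\ell}$, where $j=1$ or $j=2$, $k\ne0$ is an integer, $\ell$ is a (not necessarily even) integer, and $b_1$ is a word in $\sigma_1^2$ and $\sigma_2^2$ in reduced form such that, if $b_1$ is not the identity, the first term of $b_1$ is a non-zero even power of $\sigma_2$ if $j=1$, and a non-zero even power of $\sigma_1$ if $j=2$.
   Context: $\mathcal{B}_3$ is the braid group on three strands with standard generators $\sigma_1,\sigma_2$; $\Delta_3=\sigma_1\sigma_2\sigma_1$ is the Garside element. A word in $\sigma_1^2,\sigma_2^2$ in reduced form is a product of nonzero powers of $\sigma_1^2$ and $\sigma_2^2$ alternating between the two; its terms are these maximal powers. *)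

(* Defs.v *)
(* The braid group B_3 is given by its standard presentation
   < sigma1, sigma2 | sigma1 sigma2 sigma1 = sigma2 sigma1 sigma2 >:
   braids are words in the letters sigma_g^{+-1}, modulo the congruence
   generated by free cancellation and the braid relation. *)
From Stdlib Require Import Relations.
From mathcomp Require Import all_boot all_algebra.
Import GRing.Theory Num.Theory.

Definition gen := bool.
Definition s1 : gen := false.
Definition s2 : gen := true.

(* a letter (g, true) is sigma_g, (g, false) is sigma_g^{-1} *)
Definition letter := (gen * bool)%type.
Definition word := seq letter.

Definition gpow (g : gen) (k : int) : word :=
  match k with
  | Posz n => nseq n (g, true)
  | Negz n => nseq n.+1 (g, false)
  end.

Definition Delta : word := [:: (s1, true); (s2, true); (s1, true)].
Definition Delta_inv : word := [:: (s1, false); (s2, false); (s1, false)].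

Definition Delta_pow (l : int) : word :=
  match l with
  | Posz n => flatten (nseq n Delta)
  | Negz n => flatten (nseq n.+1 Delta_inv)
  end.

Inductive braid_step : word -> word -> Prop :=
| bs_cancel (u v : word) (g : gen) (s : bool) :
    braid_step (u ++ (g, s) :: (g, ~~ s) :: v) (u ++ v)
| bs_braid (u v : word) :
    braid_step (u ++ [:: (s1, true); (s2, true); (s1, true)] ++ v)
               (u ++ [:: (s2, true); (s1, true); (s2, true)] ++ v).

Definition braid_eq : word -> word -> Prop :=
  clos_refl_sym_trans word braid_step.

(* A word in sigma1^2, sigma2^2 in reduced form is recorded by its list of
   terms: (g, m) stands for the term (sigma_g^2)^m = sigma_g^(2m), m <> 0,
   and consecutive terms use different generators. *)
Definition rterm := (gen * int)%type.

Fixpoint reduced (b : seq rterm) : Prop :=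
  match b with
  | [::] => True
  | (g, m) :: b' =>
      m <> 0%R /\
      match b' with [::] => True | (g', _) :: _ => g' <> g end /\
      reduced b'
  end.

Definition eval_red (b : seq rterm) : word :=
  flatten (map (fun t => gpow t.1 (2 * t.2)%R) b).

Definition first_ok (j : gen) (b : seq rterm) : Prop :=
  match b with
  | [::] => True
  | (g, _) :: _ => g = ~~ j
  end.

Definition nf_data (j : gen) (k : int) (b1 : seq rterm) (l : int) : Prop :=
  k <> 0%R /\ reduced b1 /\ first_ok j b1.

Definition nf_word (j : gen) (k : int) (b1 : seq rterm) (l : int) : word :=
  gpow j k ++ eval_red b1 ++ Delta_pow l.

(* Main.v *)
Require Import Defs.
From Stdlib Require Import Setoid Morphisms Relations.
From mathcomp Require Import all_boot all_algebra zify.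
Import GRing.Theory Num.Theory.
Local Open Scope ring_scope.

Definition eps (e : bool) : int := if e then 1 else -1.
Definition swapb (b : seq rterm) : seq rterm := map (fun t => (~~ t.1, t.2)) b.
Inductive st := Dl of int | Nf of gen & int & seq rterm & int.
Definition mk (j : gen) (c : int) (b : seq rterm) (l : int) : st :=
  if c == 0 then (match b with [::] => Dl l | (g,m)::b' => Nf g (2 * m) b' l end)
  else Nf j c b l.
Definition mrg (j : gen) (c : int) (b : seq rterm) (l : int) : st :=
  match b with (g,m)::b' => if g == j then Nf j (c + 2 * m) b' l else Nf j c b l
  | [::] => Nf j c [::] l end.
Definition act (a : letter) (x : st) : st :=
 let (i,e) := a in
 match x with
 | Dl l => Nf i (eps e) [::] l
 | Nf j k b l =>
   if i == j then mk j (k + eps e) b l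
   else if (k %% 2 == 0)%Z then Nf i (eps e) ((j, (k %/ 2)%Z) :: b) l
   else if k - eps e == 0 then mrg j (- eps e) (swapb b) (l + eps e)
   else Nf j (- eps e) ((i, ((k - eps e) %/ 2)%Z) :: swapb b) (l + eps e)
 end.
Definition valid (x : st) : Prop :=
  match x with Dl _ => True | Nf j k b l => nf_data j k b l end.

Lemma swapbK b : swapb (swapb b) = b.
Proof. by rewrite /swapb -map_comp map_id_in // => -[g m] _ /=; rewrite negbK. Qed.

Lemma t1 (k : int) : (k %% 2 == 0)%Z = false -> k - 1 == 0 = false -> (2 * ((k - 1) %/ 2)%Z) = k - 1.
Proof. move=> *; lia. Qed.

Ltac splitifs := repeat (match goal with
  | |- context [if ?c then _ else _] => let H := fresh "H" in case: ifP => H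
  end; rewrite /= ?swapbK ?negbK).

Ltac fin := try done; try (exfalso; lia); rewrite ?negbK; repeat progress f_equal; try lia.

Lemma act_cancel i e x : valid x -> act (i, ~~e) (act (i,e) x) = x.
Proof.
case: x => [l|j k b l] /=.
  by case: i; case: e; rewrite /= /mk /=; splitifs; fin.
case=> k0 [rb fo].
case: b rb fo => [|[g m] b] /=; [move=> _ _|move=> rb ->]; case: i; case: j; case: e => //=;
  rewrite /mk /mrg; splitifs; fin.

Qed.


Lemma redE g m b : reduced ((g,m)::b) <-> m <> 0 /\ first_ok g b /\ reduced b.
Proof.
case: b => [|[g' m'] b] /=; first by [].
by case: g; case: g' => /=; split=> [[? [? ?]]|[? [? ?]]].
Qed.
Lemma red0 : reduced [::] = True. Proof. by []. Qed.
Lemma red0' : reduced [::]. Proof. by []. Qed.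
Arguments reduced : simpl never.
Lemma red_swap b : reduced (swapb b) <-> reduced b.
Proof.
elim: b => [|[g m] b IH] //=; rewrite !redE IH.
case: b {IH} => [|[g' m'] b] //=; case: g; try case: g' => /=;
  split=> -[? [? ?]]; split=> //; split => //; by case: g'.
Qed.
Lemma fo_swap j b : first_ok j (swapb b) <-> first_ok (~~j) b.
Proof. case: b => [|[g m] b] //=; case: g; case: j => /=; intuition. Qed.

Lemma valid_act a x : valid x -> valid (act a x).
Proof.
case: a => i e.
case: x => [l|j k b l] /=.
  by case: i; case: e; rewrite /nf_data /=; intuition.
rewrite /nf_data; case=> k0 [rb fo].
case: b rb fo => [|[g m] b] /=.
  move=> _ _; case: i; case: j; case: e => //=;
  rewrite /mk /mrg; splitifs; rewrite /nf_data /= ?red0 ?redE ?red_swap ?fo_swap /=; intuition (try lia; try exact: red0').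
move=> /redE [m0 [fb rb]] Eg; subst g.
case: i; case: j fb => /= fb; case: e => //=;
  rewrite /mk /mrg; splitifs; rewrite /nf_data /= ?red0 ?redE ?red_swap ?fo_swap /=; intuition (try lia; try exact: red0').

Qed.

Definition Dact (x : st) : st :=
  match x with Dl l => Dl (l + 1) | Nf j k b l => Nf (~~ j) k (swapb b) (l + 1) end.


Lemma act_braid a x : valid x -> act (a, true) (act (~~a, true) (act (a, true) x)) = Dact x.
Proof.
case: x => [l|j k b l] /=.
  by case: a; rewrite /= /mk /mrg /=; splitifs; fin.
rewrite /nf_data; case=> k0 [rb fo].
case: b rb fo => [|[g m] b] /=.
  move=> _ _; case: a; case: j => //=;
  rewrite /mk /mrg; splitifs; fin.
move=> /redE [m0 [fb rb]] Eg; subst g.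
case: a; case: j fb => /= fb => //=;
  rewrite /mk /mrg; splitifs; fin.
Qed.

Lemma step_catl w u v : braid_step u v -> braid_step (w ++ u) (w ++ v).
Proof.
case=> [u' v' g s|u' v'].
  by have := bs_cancel (w ++ u') v' g s; rewrite -!catA.
by have := bs_braid (w ++ u') v'; rewrite -!catA.
Qed.
Lemma step_catr w u v : braid_step u v -> braid_step (u ++ w) (v ++ w).
Proof.
case=> [u' v' g s|u' v'].
  by have := bs_cancel u' (v' ++ w) g s; rewrite -!catA.
by have := bs_braid u' (v' ++ w); rewrite -!catA.
Qed.

Lemma beq_refl u : braid_eq u u. Proof. exact: rst_refl. Qed.
Lemma beq_sym u v : braid_eq u v -> braid_eq v u. Proof. exact: rst_sym. Qed.
Lemma beq_trans {u v w} : braid_eq u v -> braid_eq v w -> braid_eq u w. Proof. exact: rst_trans. Qed.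

Lemma beq_catl w {u v} : braid_eq u v -> braid_eq (w ++ u) (w ++ v).
Proof.
elim=> [x y /(step_catl w) H|x|x y _ IH|x y z _ IH1 _ IH2].
- exact: rst_step.
- exact: rst_refl.
- exact: rst_sym.
- exact: rst_trans IH2.
Qed.
Lemma beq_catr w {u v} : braid_eq u v -> braid_eq (u ++ w) (v ++ w).
Proof.
elim=> [x y /(step_catr w) H|x|x y _ IH|x y z _ IH1 _ IH2].
- exact: rst_step.
- exact: rst_refl.
- exact: rst_sym.
- exact: rst_trans IH2.
Qed.

#[local] Hint Resolve beq_refl : core.

Add Parametric Relation : word braid_eq
  reflexivity proved by beq_refl symmetry proved by beq_sym transitivity proved by (@beq_trans)
  as beq_rel.

Add Parametric Morphism : (@cat letter) with signature braid_eq ==> braid_eq ==> braid_eq as cat_mor.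
Proof. move=> u u' H v v' H'. exact: beq_trans (beq_catr v H) (beq_catl u' H'). Qed.

Add Parametric Morphism (a : letter) : (cons a) with signature braid_eq ==> braid_eq as cons_mor.
Proof. move=> u v H. exact: (beq_catl [:: a] H). Qed.

Lemma cancel1 g s v : braid_eq ((g, s) :: (g, ~~ s) :: v) v.
Proof. apply: rst_step. exact: (bs_cancel [::] v g s). Qed.


Lemma beq_nil_r w u : braid_eq u [::] -> braid_eq (w ++ u) w.
Proof. by move=> ->; rewrite cats0. Qed.

Definition ipow (x xi : word) (k : int) : word :=
  match k with
  | Posz n => flatten (nseq n x)
  | Negz n => flatten (nseq n.+1 xi)
  end.

Lemma ipow_succ x xi k : braid_eq (x ++ xi) [::] ->
  braid_eq (x ++ ipow x xi k) (ipow x xi (k + 1)).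
Proof.
move=> Hx; case: k => n.
  by have -> : Posz n + 1 = Posz n.+1 by lia.
case: n => [|n].
  have -> : Negz 0 + 1 = 0 by lia.
  by rewrite /= cats0.
have -> : Negz n.+1 + 1 = Negz n by lia.
by rewrite /= catA Hx.
Qed.

Lemma ipow_pred x xi k : braid_eq (xi ++ x) [::] ->
  braid_eq (xi ++ ipow x xi k) (ipow x xi (k - 1)).
Proof.
move=> Hx; case: k => n.
  case: n => [|n].
    by have -> : Posz 0 - 1 = Negz 0 by lia.
  have -> : Posz n.+1 - 1 = Posz n by lia.
  by rewrite /= catA Hx.
by have -> : Negz n - 1 = Negz n.+1 by lia.
Qed.

Lemma ipow_add x xi a b : braid_eq (x ++ xi) [::] -> braid_eq (xi ++ x) [::] ->
  braid_eq (ipow x xi a ++ ipow x xi b) (ipow x xi (a + b)).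
Proof.
move=> H1 H2; case: a => n.
  elim: n => [|n IH]; first by rewrite add0r.
  have -> : Posz n.+1 + b = (Posz n + b) + 1 by lia.
  by rewrite -ipow_succ // -IH (_ : ipow x xi n.+1 = x ++ ipow x xi n) // catA.
elim: n => [|n IH].
  have -> : Negz 0 + b = b - 1 by lia.
  by rewrite -ipow_pred //= cats0.
have -> : Negz n.+1 + b = (Negz n + b) - 1 by lia.
by rewrite -ipow_pred // -IH (_ : ipow x xi (Negz n.+1) = xi ++ ipow x xi (Negz n)) // catA.
Qed.

Lemma Delta_ipow l : Delta_pow l = ipow Delta Delta_inv l.
Proof. by case: l. Qed.

Lemma flatten_nseq1 (a : letter) n : flatten (nseq n [:: a]) = nseq n a.
Proof. by elim: n => //= n ->. Qed.

Lemma gpow_ipow g k : gpow g k = ipow [:: (g, true)] [:: (g, false)] k.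
Proof. by case: k => n /=; rewrite flatten_nseq1. Qed.

Lemma gpow_add g a b : braid_eq (gpow g a ++ gpow g b) (gpow g (a + b)).
Proof. by rewrite !gpow_ipow; apply: ipow_add; rewrite /= cancel1. Qed.

Lemma DDi : braid_eq (Delta ++ Delta_inv) [::].
Proof. by rewrite /= (cancel1 s1 true) (cancel1 s2 true) (cancel1 s1 true). Qed.
Lemma DiD : braid_eq (Delta_inv ++ Delta) [::].
Proof. by rewrite /= (cancel1 s1 false) (cancel1 s2 false) (cancel1 s1 false). Qed.

Lemma Delta_pow_add a b : braid_eq (Delta_pow a ++ Delta_pow b) (Delta_pow (a + b)).
Proof. rewrite !Delta_ipow; apply: ipow_add; [exact: DDi|exact: DiD]. Qed.

Definition sw (a : letter) : letter := (~~ a.1, a.2).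
Definition swapw (w : word) : word := map sw w.

Lemma conj_word x (f : letter -> letter) :
  (forall a, braid_eq (x ++ [:: a]) (f a :: x)) ->
  forall w, braid_eq (x ++ w) (map f w ++ x).
Proof.
move=> H; elim=> [|a w IH] /=; first by rewrite cats0.
by rewrite -cat1s catA H /= IH.
Qed.

Lemma braid1 u v : braid_eq (u ++ [:: (s1, true); (s2, true); (s1, true)] ++ v)
                             (u ++ [:: (s2, true); (s1, true); (s2, true)] ++ v).
Proof. apply: rst_step; exact: bs_braid. Qed.

Lemma Delta_sw_pos g : braid_eq (Delta ++ [:: (g, true)]) ((~~ g, true) :: Delta).
Proof.
case: g => /=.
  have := braid1 [:: (s1, true)] [::]; rewrite /= => H. by symmetry.
by have := braid1 [::] [:: (s1, true)].
Qed.

Lemma Delta_sw a : braid_eq (Delta ++ [:: a]) (sw a :: Delta).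
Proof.
case: a => g [|]; first exact: Delta_sw_pos.
rewrite /sw /=.
transitivity ((~~ g, false) :: ((~~ g, true) :: Delta) ++ [:: (g, false)]).
  by rewrite cat_cons (cancel1 (~~ g) false).
rewrite -Delta_sw_pos -catA.
by rewrite [[:: (g, true)] ++ _]/= (cancel1 g true) cats0.
Qed.

Lemma Dinv_sw a : braid_eq (Delta_inv ++ [:: a]) (sw a :: Delta_inv).
Proof.
have H1 : braid_eq (a :: Delta) (Delta ++ [:: sw a]).
  by have := Delta_sw (sw a); rewrite /sw /= negbK; case: a => g s /= H; symmetry.
transitivity (Delta_inv ++ (a :: Delta) ++ Delta_inv).
  apply: beq_catl; rewrite cat_cons; apply: cons_mor_Proper.
  symmetry; exact: DDi.
transitivity (Delta_inv ++ (Delta ++ [:: sw a]) ++ Delta_inv).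
  apply: beq_catl; exact: (beq_catr Delta_inv H1).
rewrite !catA; change (sw a :: Delta_inv) with ([:: sw a] ++ Delta_inv); apply: beq_catr.
transitivity ([::] ++ [:: sw a]); last by [].
apply: beq_catr; exact: DiD.
Qed.

Lemma swapw_cancel : forall w, swapw (swapw w) = w.
Proof. by elim=> [|[g s] w IH] //=; rewrite /sw /= negbK IH. Qed.

Lemma Dp1 : Delta_pow 1 = Delta. Proof. exact: cats0. Qed.
Lemma Dm1 : Delta_pow (-1) = Delta_inv. Proof. exact: cats0. Qed.

Lemma Dpow1_conj e w : braid_eq (Delta_pow (if e then 1 else -1) ++ w)
                                  (swapw w ++ Delta_pow (if e then 1 else -1)).
Proof.
case: e; rewrite ?Dp1 ?Dm1.
  exact: (conj_word Delta sw Delta_sw).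
exact: (conj_word Delta_inv sw Dinv_sw).
Qed.

#[local] Hint Resolve beq_refl : core.

Lemma swapw_gpow g k : swapw (gpow g k) = gpow (~~ g) k.
Proof. by case: k => n; rewrite /swapw /= map_nseq. Qed.

Lemma swapw_cat u v : swapw (u ++ v) = swapw u ++ swapw v.
Proof. exact: map_cat. Qed.

Lemma swapw_eval b : swapw (eval_red b) = eval_red (swapb b).
Proof. by elim: b => [|[g m] b IH] //=; rewrite swapw_cat IH swapw_gpow. Qed.

Lemma key_pos i k : braid_eq ((i, true) :: gpow (~~ i) k)
                             ((~~ i, false) :: gpow i (k - 1) ++ Delta).
Proof.
transitivity ((i, true) :: (gpow (~~ i) 1 ++ gpow (~~ i) (k - 1))).
  apply: cons_mor_Proper; rewrite gpow_add.
  by have -> : 1 + (k - 1) = k by lia.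
transitivity ((~~ i, false) :: (~~ i, true) :: (i, true) :: (~~ i, true) :: gpow (~~ i) (k - 1)).
  by rewrite (cancel1 (~~ i) false).
apply: cons_mor_Proper.
have HD : braid_eq [:: (~~ i, true); (i, true); (~~ i, true)] Delta.
  case: i => //=. symmetry; exact: (braid1 [::] [::]).
change ((~~ i, true) :: (i, true) :: (~~ i, true) :: gpow (~~ i) (k - 1))
  with ([:: (~~ i, true); (i, true); (~~ i, true)] ++ gpow (~~ i) (k - 1)).
by rewrite HD (conj_word Delta sw Delta_sw) -/(swapw _) swapw_gpow negbK.
Qed.

Lemma key_neg i k : braid_eq ((i, false) :: gpow (~~ i) k)
                             ((~~ i, true) :: gpow i (k + 1) ++ Delta_inv).
Proof.
change ((~~ i, true) :: gpow i (k + 1) ++ Delta_inv) with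
  (((~~ i, true) :: gpow i (k + 1)) ++ Delta_inv).
have := key_pos (~~ i) (k + 1); rewrite negbK => ->.
have -> : k + 1 - 1 = k by lia.
by rewrite cat_cons -catA DDi cats0.
Qed.

Lemma key i e k : braid_eq ((i, e) :: gpow (~~ i) k)
   (gpow (~~ i) (- eps e) ++ gpow i (k - eps e) ++ Delta_pow (eps e)).
Proof.
case: e; rewrite /eps.
  by rewrite Dp1 key_pos.
rewrite Dm1 key_neg.
by have -> : k - -1 = k + 1 by lia.
Qed.

#[local] Hint Resolve beq_refl : core.

Definition nfw (x : st) : word :=
  match x with Dl l => Delta_pow l | Nf j k b l => nf_word j k b l end.

Lemma eval_cons g m b : eval_red ((g, m) :: b) = gpow g (2 * m) ++ eval_red b.
Proof. by []. Qed.

Lemma mk_ok j c b l : braid_eq (gpow j c ++ eval_red b ++ Delta_pow l) (nfw (mk j c b l)).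
Proof. rewrite /mk; case: eqP => [->|_]; last exact: beq_refl.
case: b => [|[g m] b]; first exact: beq_refl.
by rewrite /= /nf_word eval_cons catA. Qed.

Lemma mrg_ok j c b l : braid_eq (gpow j c ++ eval_red b ++ Delta_pow l) (nfw (mrg j c b l)).
Proof.
case: b => [|[g m] b]; first exact: beq_refl.
rewrite /mrg; case: eqP => [->|_]; last exact: beq_refl.
by rewrite /= /nf_word eval_cons -(catA (gpow j (2 * m))) catA gpow_add.
Qed.

Lemma letter_gpow i e w : (i, e) :: w = gpow i (eps e) ++ w.
Proof. by case: e. Qed.

Lemma Dconj e w : braid_eq (Delta_pow (eps e) ++ w) (swapw w ++ Delta_pow (eps e)).
Proof. exact: Dpow1_conj. Qed.

Lemma step_ok a x : braid_eq (a :: nfw x) (nfw (act a x)).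
Proof.
have He : forall e, eps e = 1 \/ eps e = -1 by case; [left|right].
case: a => i e; case: x => [l|j k b l] /=.
  by case: e.
case: ifP => [/eqP <-|/negbT Hij].
  by rewrite /nf_word letter_gpow catA gpow_add addrC; exact: mk_ok.
have Ej : j = ~~ i by case: i j Hij => [] [].
subst j.
case: ifP => Hk.
  rewrite /nfw /nf_word eval_cons (_ : 2 * (k %/ 2)%Z = k); last by lia.
  by rewrite letter_gpow -!catA.
rewrite {1}/nf_word.
change ((i, e) :: gpow (~~ i) k ++ eval_red b ++ Delta_pow l) with
  (((i, e) :: gpow (~~ i) k) ++ (eval_red b ++ Delta_pow l)).
rewrite key -!catA (catA (Delta_pow (eps e))) Dconj swapw_eval -!catA Delta_pow_add (addrC (eps e)).
case: ifP => Hk2.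
  rewrite (eqP Hk2); exact: mrg_ok.
rewrite /nfw /nf_word eval_cons (_ : 2 * ((k - eps e) %/ 2)%Z = k - eps e); last first.
  by case: (He e) => ->; lia.
by rewrite -!catA.
Qed.

#[local] Hint Resolve beq_refl : core.

Definition ev (w : word) : st := foldr act (Dl 0) w.

Lemma ev_cat u v : ev (u ++ v) = foldr act (ev v) u.
Proof. exact: foldr_cat. Qed.

Lemma valid_foldr w y : valid y -> valid (foldr act y w).
Proof. by elim: w => //= a w IH Hy; apply: valid_act; apply: IH. Qed.

Lemma ev_valid w : valid (ev w).
Proof. exact: valid_foldr. Qed.

Lemma ev_correct w : braid_eq w (nfw (ev w)).
Proof.
elim: w => [|a w IH] /=; first exact: beq_refl.
apply: (beq_trans (cons_mor_Proper a _ _ IH)); exact: step_ok.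
Qed.

Lemma ev_step u v : braid_step u v -> ev u = ev v.
Proof.
case=> [u' v' g s|u' v']; rewrite !ev_cat; congr (foldr act _ u').
  have := act_cancel g (~~ s) _ (ev_valid v'); rewrite negbK /=. done.
have H1 := act_braid s1 _ (ev_valid v'); have H2 := act_braid s2 _ (ev_valid v').
simpl in H1, H2 |- *. by rewrite H1 H2.
Qed.

Lemma ev_eq u v : braid_eq u v -> ev u = ev v.
Proof.
elim=> [x y /ev_step //|x //|x y _ -> //|x y z _ -> _ -> //].
Qed.

Definition tl (y : st) : seq rterm * int :=
  match y with Dl l => ([::], l) | Nf j c B l => ((j, (c %/ 2)%Z) :: B, l) end.
Definition fresh (g : gen) (y : st) : Prop :=
  match y with Dl _ => True | Nf j c _ _ => j = ~~ g /\ (c %% 2)%Z = 0 end.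

Lemma act_fresh g e y : fresh g y -> act (g, e) y = Nf g (eps e) (tl y).1 (tl y).2.
Proof.
case: y => [l|j c B l] //= [-> Hc].
by case: g; rewrite /= Hc eqxx.
Qed.

Lemma pow_act g k y : k != 0 -> fresh g y ->
  foldr act y (gpow g k) = Nf g k (tl y).1 (tl y).2.
Proof.
move=> Hk Hf; case: k Hk => n Hk.
  case: n Hk => [//|n] _.
  elim: n => [|n IH]; first exact: act_fresh.
  change (act (g, true) (foldr act y (gpow g (Posz n.+1))) = Nf g (Posz n.+2) (tl y).1 (tl y).2).
  rewrite IH /= eqxx /mk.
  try (case: ifP => H; first lia).
  congr Nf; lia.
clear Hk; elim: n => [|n IH]; first exact: act_fresh.
change (act (g, false) (foldr act y (gpow g (Negz n))) = Nf g (Negz n.+1) (tl y).1 (tl y).2).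
rewrite IH /= eqxx /mk.
try (case: ifP => H; first lia).
congr Nf; lia.
Qed.

Definition stOf (b : seq rterm) (l : int) : st :=
  match b with [::] => Dl l | (g, m) :: b' => Nf g (2 * m) b' l end.

Lemma ev_red b l : reduced b -> foldr act (Dl l) (eval_red b) = stOf b l.
Proof.
elim: b => [|[g m] b IH] //= /redE [m0 [fb rb]].
rewrite -/(eval_red b) foldr_cat IH // pow_act; last 2 first.
- simpl; apply/eqP; lia.
- simpl; case: b fb {IH rb} => [|[g' m'] b] //= ->; split => //; lia.
simpl; case: b fb {IH rb} => [|[g' m'] b] //= _.
congr Nf; congr cons; congr pair; lia.
Qed.

Lemma Delta_ev l : foldr act (Dl l) Delta = Dl (l + 1).
Proof. rewrite /= /mk /mrg; splitifs; fin. Qed.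
Lemma Dinv_ev l : foldr act (Dl l) Delta_inv = Dl (l - 1).
Proof. rewrite /= /mk /mrg; splitifs; fin. Qed.

Lemma ev_Dpow l0 l : foldr act (Dl l0) (Delta_pow l) = Dl (l0 + l).
Proof.
case: l => n.
  elim: n => [|n IH]; first by rewrite /= addr0.
  change (foldr act (Dl l0) (Delta ++ Delta_pow (Posz n)) = Dl (l0 + Posz n.+1)).
  rewrite foldr_cat IH Delta_ev; congr Dl; lia.
elim: n => [|n IH].
  change (foldr act (Dl l0) (Delta_inv ++ [::]) = Dl (l0 + Negz 0)).
  rewrite cats0 Dinv_ev; congr Dl; lia.
change (foldr act (Dl l0) (Delta_inv ++ Delta_pow (Negz n)) = Dl (l0 + Negz n.+1)).
rewrite foldr_cat IH Dinv_ev; congr Dl; lia.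
Qed.

Lemma ev_nf x : valid x -> ev (nfw x) = x.
Proof.
case: x => [l|j k b l] /=.
  by rewrite /ev ev_Dpow add0r.
case=> k0 [rb fo].
rewrite /ev /nf_word !foldr_cat ev_Dpow add0r ev_red // pow_act; last 2 first.
- by apply/eqP.
- case: b fo {rb} => [|[g m] b] //= ->; split => //; lia.
case: b fo {rb} => [|[g m] b] //= _.
congr Nf; congr cons; congr pair; lia.
Qed.

Theorem lemma2 (b : word) :
  ~ (exists n : int, braid_eq b (Delta_pow n)) ->
  exists j k b1 l,
    [/\ nf_data j k b1 l, braid_eq b (nf_word j k b1 l) &
      forall j' k' b1' l', nf_data j' k' b1' l' ->
        braid_eq b (nf_word j' k' b1' l') ->
        (j', k', b1', l') = (j, k, b1, l)].
Proof.
move=> HnD.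
have V := ev_valid b; have Cb := ev_correct b.
case E: (ev b) V Cb => [l|j k b1 l] V Cb.
  by exfalso; apply: HnD; exists l.
exists j, k, b1, l; split => // j' k' b1' l' V' C'.
have := ev_eq _ _ C'; rewrite E (@ev_nf (Nf j' k' b1' l')) //.
by case=> -> -> -> ->.
Qed.
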